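(* Let $\lambda,\mu$ be weights. If $\mu\subset\lambda$ then $\mu\le\lambda$ in the Bruhat order. Moreover: (i) if $a\lambda$ is an oriented cup diagram then $a=\underline\alpha$ for a unique weight $\alpha$ with $\alpha\subset\lambda$; (ii) if $\lambda b$ is an oriented cap diagram then $b=\overline\beta$ for a unique weight $\beta$ with $\lambda\supset\beta$; (iii) if $a\lambda b$ is an oriented circle diagram then $a=\underline\alpha$ and $b=\overline\beta$ for unique weights $\alpha,\beta$ with $\alpha\subset\lambda\supset\beta$.
   Context: A number line carries vertices indexed by consecutive integers. A weight labels each vertex by $\circ,\times,\vee,\wedge$ such that outside a finite set no $\vee$ is left of an $\wedge$. The Bruhat order $\le$ is generated by declaring that interchanging a $\vee$ with an $\wedge$ to its right makes a weight bigger. $\lambda\sim\mu$ if $\mu$ is obtained from $\lambda$ by permuting $\vee$'s and $\wedge$'s. A cup diagram consists of finitely many non-crossing cups joining pairs of vertices and rays down to infinity; cap diagrams similarly with caps and upward rays; $c^*$ is the mirror image. $c\lambda$ is an oriented cup diagram if free vertices are labelled $\circ/\times$, each cup has one $\vee$ and one $\wedge$ end, ray vertices are $\vee/\wedge$, and no two rays are labelled $\vee,\wedge$ in that order left to right; $\lambda c$ for a cap diagram is oriented if $c^*\lambda$ is. Degree: number of clockwise cups/caps (left end labelled $\wedge$). An oriented circle diagram $a\lambda b$ has $a\lambda$, $\lambda b$ oriented. $\underline\lambda$ is the unique cup diagram with $\underline\lambda\lambda$ oriented of degree $0$; $\overline\lambda=(\underline\lambda)^*$. $\mu\subset\lambda$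 (also written $\lambda\supset\mu$) means $\mu\sim\lambda$ and $\underline\mu\lambda$ is an oriented cup diagram. *)

(* Defs.v *)
From Stdlib Require Import ZArith List Relations.
Import ListNotations.
Open Scope Z_scope.

(** Labels of vertices: o, x, v (Down), ^ (Up). *)
Inductive label := Circ | Cross | Down | Up.

Definition isDown (l : label) : bool := match l with Down => true | _ => false end.

Definition labelling := Z -> label.

Definition is_weight (lam : labelling) : Prop :=
  exists F : list Z, forall i j, i < j -> ~ In i F -> ~ In j F ->
    ~ (lam i = Down /\ lam j = Up).

Definition bruhat_step (lam mu : labelling) : Prop :=
  exists i j, i < j /\ lam i = Down /\ lam j = Up /\
    mu i = Up /\ mu j = Down /\ (forall k, k <> i -> k <> j -> mu k = lam k).

Definition bruhat_le : relation labelling := clos_refl_trans labelling bruhat_step.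

(** lam ~ mu: mu is obtained from lam by (finitely) permuting v's and ^'s. *)
Definition sim (lam mu : labelling) : Prop :=
  (forall i, (lam i = Circ <-> mu i = Circ) /\ (lam i = Cross <-> mu i = Cross)) /\
  exists L : list Z, NoDup L /\ (forall i, ~ In i L -> lam i = mu i) /\
    length (filter (fun i => isDown (lam i)) L) = length (filter (fun i => isDown (mu i)) L).

(** Status of a vertex in a cup (or cap) diagram: free, end of a ray,
    or joined by a cup (cap) to vertex j. *)
Inductive vert := VFree | VRay | VArc (j : Z).
Definition arcs := Z -> vert.

Record cupdiag := CupDiag { cup_arcs : arcs }.
Record capdiag := CapDiag { cap_arcs : arcs }.

Definition cup_star (c : cupdiag) : capdiag := CapDiag (cup_arcs c).
Definition cap_star (b : capdiag) : cupdiag := CupDiag (cap_arcs b).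

Definition arcs_wf (d : arcs) : Prop :=
  (forall i j, d i = VArc j -> i <> j /\ d j = VArc i) /\
  (exists L : list Z, forall i j, d i = VArc j -> In i L) /\
  (forall i j k l, d i = VArc j -> d k = VArc l -> i < k < j -> i < l < j) /\
  (forall i j k, d i = VArc j -> d k = VRay -> ~ (i < k < j)).

Definition cup_wf (c : cupdiag) : Prop := arcs_wf (cup_arcs c).
Definition cap_wf (b : capdiag) : Prop := arcs_wf (cap_arcs b).

Definition oriented_cup (c : cupdiag) (lam : labelling) : Prop :=
  let d := cup_arcs c in
  (forall i, d i = VFree <-> (lam i = Circ \/ lam i = Cross)) /\
  (forall i j, d i = VArc j -> i < j ->
     (lam i = Down /\ lam j = Up) \/ (lam i = Up /\ lam j = Down)) /\
  (forall i, d i = VRay -> lam i = Down \/ lam i = Up) /\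
  (forall i j, i < j -> d i = VRay -> d j = VRay -> ~ (lam i = Down /\ lam j = Up)).

Definition oriented_cap (lam : labelling) (b : capdiag) : Prop :=
  oriented_cup (cap_star b) lam.

Definition oriented_circle (a : cupdiag) (lam : labelling) (b : capdiag) : Prop :=
  oriented_cup a lam /\ oriented_cap lam b.

Definition cup_degree (c : cupdiag) (lam : labelling) (n : nat) : Prop :=
  exists L : list Z, NoDup L /\
    (forall i, In i L <-> exists j, cup_arcs c i = VArc j /\ i < j /\ lam i = Up) /\
    length L = n.

Definition is_underline (lam : labelling) (c : cupdiag) : Prop :=
  cup_wf c /\ oriented_cup c lam /\ cup_degree c lam 0.

Definition is_overline (lam : labelling) (b : capdiag) : Prop :=
  exists c, is_underline lam c /\ b = cup_star c.

Definition wsubset (mu lam : labelling) : Prop :=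
  sim mu lam /\ exists c, is_underline mu c /\ oriented_cup c lam.

(* Main.v *)
Require Import Defs.
From Stdlib Require Import ZArith List Relations Lia FunctionalExtensionality.
Import ListNotations.
Open Scope Z_scope.
Open Scope bool_scope.

Definition isUp (l:label) : bool := match l with Up => true | _ => false end.
Definition isRay (v:vert) : bool := match v with VRay => true | _ => false end.
Definition isArcb (v:vert) : bool := match v with VArc _ => true | _ => false end.
Definition partner (d:arcs) (i:Z) : Z := match d i with VArc j => j | _ => i end.
Definition leqb (a b : label) : bool := match a, b with
 | Circ, Circ | Cross, Cross | Down, Down | Up, Up => true | _, _ => false end.
Definition difb (f g : labelling) (i : Z) : bool := negb (leqb (f i) (g i)).

Lemma leqb_spec a b : leqb a b = true <-> a = b.
Proof. destruct a, b; simpl; split; congruence. Qed.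

Lemma filter_split {A} (P Q : A -> bool) (L : list A) :
  length (filter P L) = (length (filter (fun x => P x && Q x) L) + length (filter (fun x => P x && negb (Q x)) L))%nat.
Proof. induction L as [|a L IH]; simpl; auto. destruct (P a), (Q a); simpl; lia. Qed.

Lemma filter_compl {A} (P : A -> bool) (L : list A) :
  length L = (length (filter P L) + length (filter (fun x => negb (P x)) L))%nat.
Proof. induction L as [|a L IH]; simpl; auto. destruct (P a); simpl; lia. Qed.

Lemma filter_pos {A} (P : A -> bool) (L : list A) x : In x L -> P x = true -> (length (filter P L) > 0)%nat.
Proof. intros H1 H2. assert (In x (filter P L)) by (apply filter_In; auto).
  destruct (filter P L); simpl in *; [contradiction|lia]. Qed.

Lemma filter_get {A} (P : A -> bool) (L : list A) : (length (filter P L) > 0)%nat -> exists x, In x L /\ P x = true.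
Proof. intros H. destruct (filter P L) as [|z l] eqn:E; simpl in H; [lia|].
  exists z. apply filter_In. rewrite E. simpl; auto. Qed.

Lemma NoDup_map_inj_in (p : Z -> Z) (l : list Z) : NoDup l ->
  (forall a b, In a l -> In b l -> p a = p b -> a = b) -> NoDup (map p l).
Proof.
  induction 1 as [|x l Hx Hnd IH]; intros Hinj; simpl; constructor.
  - intros Hin. apply in_map_iff in Hin as [y [Hy Hyl]].
    assert (y = x) by (apply Hinj; simpl; auto). subst. contradiction.
  - apply IH. intros a b Ha Hb; apply Hinj; simpl; auto.
Qed.

Lemma pair_le (L : list Z) (P Q : Z -> bool) (p : Z -> Z) : NoDup L ->
  (forall i, In i L -> P i = true -> In (p i) L /\ Q (p i) = true /\ p (p i) = i) ->
  (length (filter P L) <= length (filter Q L))%nat.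
Proof.
  intros Hnd H. rewrite <- (length_map p).
  apply NoDup_incl_length.
  - apply NoDup_map_inj_in. apply NoDup_filter; auto.
    intros a b Ha Hb Hab. apply filter_In in Ha as [Ha1 Ha2]. apply filter_In in Hb as [Hb1 Hb2].
    destruct (H a Ha1 Ha2) as [_ [_ Ea]]. destruct (H b Hb1 Hb2) as [_ [_ Eb]].
    rewrite <- Ea, <- Eb, Hab. reflexivity.
  - intros x Hx. apply in_map_iff in Hx as [y [<- Hy]]. apply filter_In in Hy as [Hy1 Hy2].
    destruct (H y Hy1 Hy2) as [A [B _]]. apply filter_In; auto.
Qed.

Definition symm (d : arcs) := forall i j, d i = VArc j -> i <> j /\ d j = VArc i.

Lemma arc_orient (c : cupdiag) f i j :
  symm (cup_arcs c) -> oriented_cup c f -> cup_arcs c i = VArc j ->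
  (f i = Down /\ f j = Up) \/ (f i = Up /\ f j = Down).
Proof.
  intros Hs [_ [Ho _]] Hij. destruct (Hs _ _ Hij) as [Hne Hji].
  destruct (Z.lt_trichotomy i j) as [Hlt|[Heq|Hgt]].
  - apply Ho; auto.
  - contradiction.
  - destruct (Ho j i Hji Hgt) as [[A B]|[A B]]; [right|left]; auto.
Qed.

Lemma sim_du f g i : sim f g -> difb f g i = true ->
  (f i = Down /\ g i = Up) \/ (f i = Up /\ g i = Down).
Proof.
  intros [Hcc _] Hi. unfold difb in Hi. destruct (Hcc i) as [[a b] [c d]].
  destruct (f i), (g i); simpl in Hi; try discriminate;
  try (left; split; reflexivity); try (right; split; reflexivity); exfalso;
  first [ (specialize (a eq_refl); discriminate) | (specialize (b eq_refl); discriminate)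
        | (specialize (c eq_refl); discriminate) | (specialize (d eq_refl); discriminate)].
Qed.

Lemma free_eq f g i : sim f g -> (f i = Circ \/ f i = Cross) -> (g i = Circ \/ g i = Cross) -> f i = g i.
Proof.
  intros [Hcc _] H1 H2. destruct (Hcc i) as [[a b] [c d]].
  destruct H1 as [H1|H1]; destruct H2 as [H2|H2]; rewrite H1, H2 in *; auto;
  first [specialize (a eq_refl); discriminate | specialize (b eq_refl); discriminate
        |specialize (c eq_refl); discriminate | specialize (d eq_refl); discriminate].
Qed.

Lemma sim_list f g : sim f g -> exists L, NoDup L /\ (forall i, ~ In i L -> f i = g i) /\
   length (filter (fun i => isDown (f i)) L) = length (filter (fun i => isDown (g i)) L).
Proof. intros [_ H]; exact H. Qed.

Lemma dif_in f g L i : (forall i, ~ In i L -> f i = g i) -> difb f g i = true -> In i L.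
Proof.
  intros Hoff Hd. destruct (in_dec Z.eq_dec i L) as [h|h]; auto.
  unfold difb in Hd. rewrite (Hoff i h) in Hd. destruct (g i); discriminate.
Qed.

Lemma dif_true f g i : f i <> g i -> difb f g i = true.
Proof. intros H. unfold difb. destruct (leqb (f i) (g i)) eqn:E; auto.
  apply leqb_spec in E. contradiction. Qed.

Lemma ray_eq (c : cupdiag) f g :
  symm (cup_arcs c) -> oriented_cup c f -> oriented_cup c g -> sim f g ->
  forall k, cup_arcs c k = VRay -> f k = g k.
Proof.
  intros Hs Of Og Hsim k Hk.
  destruct (sim_list _ _ Hsim) as [L [Hnd [Hoff Hcnt]]].
  set (dif := difb f g).
  set (R := fun i => isRay (cup_arcs c i)).
  assert (E1 : length (filter (fun i => isDown (f i)) L) = (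
     length (filter (fun i => isDown (f i) && dif i && R i) L) +
     length (filter (fun i => isDown (f i) && dif i && negb (R i)) L) +
     length (filter (fun i => isDown (f i) && negb (dif i)) L))%nat).
  { rewrite (filter_split _ dif); cbv beta.
    rewrite (filter_split (fun i => isDown (f i) && dif i) R); cbv beta. lia. }
  assert (E2 : length (filter (fun i => isDown (g i)) L) = (
     length (filter (fun i => isDown (g i) && dif i && R i) L) +
     length (filter (fun i => isDown (g i) && dif i && negb (R i)) L) +
     length (filter (fun i => isDown (g i) && negb (dif i)) L))%nat).
  { rewrite (filter_split _ dif); cbv beta.
    rewrite (filter_split (fun i => isDown (g i) && dif i) R); cbv beta. lia. }
  assert (E3 : filter (fun i => isDown (g i) && negb (dif i)) L = filter (fun i => isDown (f i) && negb (dif i)) L).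
  { apply filter_ext_in. intros i _. destruct (dif i) eqn:D; simpl.
    - rewrite !Bool.andb_false_r; auto.
    - rewrite !Bool.andb_true_r. unfold dif, difb in D.
      destruct (leqb (f i) (g i)) eqn:D'; try discriminate. apply leqb_spec in D'. rewrite D'; auto. }
  assert (E4 : forall b : Z -> bool, filter (fun i => isDown (g i) && dif i && b i) L = filter (fun i => isUp (f i) && dif i && b i) L).
  { intros b. apply filter_ext_in. intros i _. destruct (dif i) eqn:D; simpl.
    - destruct (sim_du f g i Hsim D) as [[A B]|[A B]]; rewrite A, B; auto.
    - rewrite !Bool.andb_false_r; auto. }
  assert (Hpair : forall i, In i L -> dif i = true -> R i = false ->
     (f i = Down \/ f i = Up) ->
     In (partner (cup_arcs c) i) L /\ dif (partner (cup_arcs c) i) = true /\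
     R (partner (cup_arcs c) i) = false /\
     ((f i = Down /\ f (partner (cup_arcs c) i) = Up) \/ (f i = Up /\ f (partner (cup_arcs c) i) = Down)) /\
     partner (cup_arcs c) (partner (cup_arcs c) i) = i).
  { intros i Hi Hd Hr Hfi. unfold R in Hr. destruct (cup_arcs c i) as [| |j] eqn:Ci.
    - exfalso. destruct Of as [Hf _]. apply Hf in Ci. destruct Ci, Hfi; congruence.
    - discriminate.
    - unfold partner. rewrite Ci. destruct (Hs _ _ Ci) as [_ Cj]. rewrite Cj.
      assert (Hdj : dif j = true).
      { apply dif_true. destruct (sim_du f g i Hsim Hd) as [[A B]|[A B]];
        destruct (arc_orient c f i j Hs Of Ci) as [[A' B']|[A' B']];
        destruct (arc_orient c g i j Hs Og Ci) as [[A'' B'']|[A'' B'']]; congruence. }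
      split; [apply (dif_in f g L j Hoff Hdj)|]. split; auto. split; [unfold R; rewrite Cj; auto|].
      split; auto. apply (arc_orient c f i j Hs Of Ci). }
  assert (E5 : length (filter (fun i => isDown (f i) && dif i && negb (R i)) L) =
               length (filter (fun i => isUp (f i) && dif i && negb (R i)) L)).
  { apply Nat.le_antisymm; apply (pair_le L _ _ (partner (cup_arcs c)) Hnd);
    intros i Hi HP; apply Bool.andb_true_iff in HP as [HP Hr]; apply Bool.andb_true_iff in HP as [Hf Hd];
    apply Bool.negb_true_iff in Hr;
    [assert (Hfi : f i = Down) by (destruct (f i); simpl in Hf; congruence)
    |assert (Hfi : f i = Up) by (destruct (f i); simpl in Hf; congruence)];
    destruct (Hpair i Hi Hd Hr (ltac:(auto))) as [P1 [P2 [P3 [P4 P5]]]];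
    split; auto; split; auto; rewrite P2, P3;
    destruct P4 as [[A B]|[A B]]; try congruence; rewrite B; auto. }
  rewrite (E4 R) in E2. rewrite (E4 (fun i => negb (R i))) in E2. rewrite E3 in E2.
  assert (E6 : length (filter (fun i => isDown (f i) && dif i && R i) L) =
               length (filter (fun i => isUp (f i) && dif i && R i) L)) by lia.
  destruct (leqb (f k) (g k)) eqn:Ek; [apply leqb_spec; auto|].
  exfalso. assert (Dk : dif k = true) by (unfold dif, difb; rewrite Ek; auto).
  assert (Kin : In k L) by (apply (dif_in f g L k Hoff Dk)).
  destruct Of as [_ [_ [_ Rf]]]. destruct Og as [_ [_ [_ Rg]]].
  destruct (sim_du f g k Hsim Dk) as [[A B]|[A B]].
  - assert (P : (length (filter (fun i => isDown (f i) && dif i && R i) L) > 0)%nat).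
    { apply (filter_pos _ _ k Kin). rewrite A, Dk. unfold R; rewrite Hk; auto. }
    rewrite E6 in P. apply filter_get in P as [q [Hq Pq]].
    apply Bool.andb_true_iff in Pq as [Pq Rq]; apply Bool.andb_true_iff in Pq as [Fq Dq].
    unfold R, isRay in Rq. destruct (cup_arcs c q) eqn:Cq; try discriminate.
    assert (Fq' : f q = Up) by (destruct (f q); simpl in Fq; congruence).
    destruct (sim_du f g q Hsim Dq) as [[A' B']|[A' B']]; [congruence|].
    destruct (Z.lt_trichotomy k q) as [H|[H|H]].
    + apply (Rf k q H Hk Cq); auto.
    + subst; congruence.
    + apply (Rg q k H Cq Hk); auto.
  - assert (P : (length (filter (fun i => isUp (f i) && dif i && R i) L) > 0)%nat).
    { apply (filter_pos _ _ k Kin). rewrite A, Dk. unfold R; rewrite Hk; auto. }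
    rewrite <- E6 in P. apply filter_get in P as [q [Hq Pq]].
    apply Bool.andb_true_iff in Pq as [Pq Rq]; apply Bool.andb_true_iff in Pq as [Fq Dq].
    unfold R, isRay in Rq. destruct (cup_arcs c q) eqn:Cq; try discriminate.
    assert (Fq' : f q = Down) by (destruct (f q); simpl in Fq; congruence).
    destruct (sim_du f g q Hsim Dq) as [[A' B']|[A' B']]; [|congruence].
    destruct (Z.lt_trichotomy k q) as [H|[H|H]].
    + apply (Rg k q H Hk Cq); auto.
    + subst; congruence.
    + apply (Rf q k H Cq Hk); auto.
Qed.

Lemma underline_facts mu c i j : is_underline mu c -> cup_arcs c i = VArc j -> i < j ->
  mu i = Down /\ mu j = Up.
Proof.
  intros [[Hs _] [Om [L [Hnd [HL Hlen]]]]] Hij Hlt.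
  destruct L; [|simpl in Hlen; discriminate].
  destruct Om as [_ [Ho _]]. destruct (Ho i j Hij Hlt) as [[A B]|[A B]]; auto.
  exfalso. apply (proj2 (HL i)). exists j; auto.
Qed.

Definition flip (d:arcs) (mu:labelling) (S: list Z) (k : Z) : label :=
  match d k with
  | VArc j => if Z.ltb k j then (if in_dec Z.eq_dec k S then Up else mu k)
              else (if in_dec Z.eq_dec j S then Down else mu k)
  | _ => mu k end.

Lemma flip_chain (d : arcs) mu : symm d ->
  (forall x y, d x = VArc y -> x < y -> mu x = Down /\ mu y = Up) ->
  forall S, (forall x, In x S -> exists y, d x = VArc y /\ x < y) ->
  bruhat_le mu (flip d mu S).
Proof.
  intros Hs Hmu S. induction S as [|x S IH]; intros HS.
  - replace (flip d mu []) with mu; [apply rt_refl|].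
    apply functional_extensionality; intros k. unfold flip.
    destruct (d k); auto. destruct (k <? j); simpl; auto.
  - assert (IH' := IH (fun z hz => HS z (or_intror hz))).
    destruct (in_dec Z.eq_dec x S) as [xS|xS].
    + replace (flip d mu (x :: S)) with (flip d mu S); auto.
      apply functional_extensionality; intros k. unfold flip.
      destruct (d k); auto.
      destruct (in_dec Z.eq_dec k S); destruct (in_dec Z.eq_dec k (x::S));
      destruct (in_dec Z.eq_dec j S); destruct (in_dec Z.eq_dec j (x::S)); simpl in *;
      auto; exfalso; intuition (subst; auto).
    + eapply rt_trans; [exact IH'|]. apply rt_step.
      destruct (HS x (or_introl eq_refl)) as [y [Dx Hxy]].
      destruct (Hs _ _ Dx) as [Hne Dy].
      destruct (Hmu x y Dx Hxy) as [Mx My].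
      exists x, y. unfold flip. rewrite Dx, Dy.
      assert (Lxy : (x <? y) = true) by (apply Z.ltb_lt; auto).
      assert (Lyx : (y <? x) = false) by (apply Z.ltb_ge; lia).
      rewrite Lxy, Lyx.
      split; auto.
      destruct (in_dec Z.eq_dec x S); [contradiction|].
      destruct (in_dec Z.eq_dec x (x::S)); [|simpl in *; tauto].
      repeat split; auto.
      intros k Hkx Hky. destruct (d k) eqn:Dk; auto.
      assert (Hjx : j <> x).
      { intro; subst. destruct (Hs _ _ Dk) as [_ Dxk]. rewrite Dx in Dxk. inversion Dxk; auto. }
      destruct (k <? j);
      destruct (in_dec Z.eq_dec k S); destruct (in_dec Z.eq_dec k (x::S));
      destruct (in_dec Z.eq_dec j S); destruct (in_dec Z.eq_dec j (x::S)); simpl in *;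
      try reflexivity; exfalso; intuition (subst; auto).
Qed.

Lemma part1 lam mu : wsubset mu lam -> bruhat_le mu lam.
Proof.
  intros [Hsim [c [Hu Ol]]].
  assert (Hu' := Hu). destruct Hu' as [[Hs [[L0 HL0] _]] [Om _]].
  set (d := cup_arcs c).
  set (S := filter (fun i => match d i with VArc j => Z.ltb i j && isUp (lam i) | _ => false end) L0).
  assert (HS : forall x, In x S -> exists y, d x = VArc y /\ x < y).
  { intros x Hx. apply filter_In in Hx as [_ Hx]. destruct (d x) eqn:Dx; try discriminate.
    exists j; split; auto. apply Bool.andb_true_iff in Hx as [Hx _]. apply Z.ltb_lt; auto. }
  assert (Hmu : forall x y, d x = VArc y -> x < y -> mu x = Down /\ mu y = Up).
  { intros x y H1 H2. apply (underline_facts mu c); auto. }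
  replace lam with (flip d mu S); [apply flip_chain; auto|].
  apply functional_extensionality; intros k. unfold flip.
  destruct (d k) as [| |j] eqn:Dk.
  - apply free_eq; auto. apply (proj1 (proj1 Om k)); auto. apply (proj1 (proj1 Ol k)); auto.
  - apply (ray_eq c); auto.
  - destruct (Hs _ _ Dk) as [Hne Dj]. fold d in Dj.
    destruct (k <? j) eqn:Lk.
    + apply Z.ltb_lt in Lk. destruct (Hmu k j Dk Lk) as [Mk Mj].
      destruct (arc_orient c lam k j Hs Ol Dk) as [[A B]|[A B]].
      * destruct (in_dec Z.eq_dec k S) as [h|h]; try congruence.
        apply filter_In in h as [_ h]. fold d in h. rewrite Dk, A in h.
        rewrite Bool.andb_false_r in h; discriminate.
      * destruct (in_dec Z.eq_dec k S) as [h|h]; try congruence.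
        exfalso; apply h. apply filter_In. split; [apply (HL0 k j); auto|].
        fold d. rewrite Dk, A. simpl. rewrite Bool.andb_true_r. apply Z.ltb_lt; auto.
    + apply Z.ltb_ge in Lk. assert (Ljk : j < k) by lia.
      destruct (Hmu j k Dj Ljk) as [Mj Mk].
      destruct (arc_orient c lam j k Hs Ol Dj) as [[A B]|[A B]].
      * destruct (in_dec Z.eq_dec j S) as [h|h]; try congruence.
        apply filter_In in h as [_ h]. fold d in h. rewrite Dj, A in h.
        rewrite Bool.andb_false_r in h; discriminate.
      * destruct (in_dec Z.eq_dec j S) as [h|h]; try congruence.
        exfalso; apply h. apply filter_In. split; [apply (HL0 j k); auto|].
        fold d. rewrite Dj, A. simpl. rewrite Bool.andb_true_r. apply Z.ltb_lt; auto.
Qed.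

Definition mkalpha (d : arcs) (lam : labelling) (i : Z) : label :=
  match d i with VArc j => if Z.ltb i j then Down else Up | _ => lam i end.

Lemma arc_count (c : cupdiag) f LA : symm (cup_arcs c) -> oriented_cup c f -> NoDup LA ->
  (forall i, In i LA -> exists j, cup_arcs c i = VArc j) ->
  (forall i j, In i LA -> cup_arcs c i = VArc j -> In j LA) ->
  (2 * length (filter (fun i => isDown (f i)) LA) = length LA)%nat.
Proof.
  intros Hs Of Hnd Har Hcl.
  rewrite (filter_compl (fun i => isDown (f i)) LA).
  assert (E : filter (fun i => negb (isDown (f i))) LA = filter (fun i => isUp (f i)) LA).
  { apply filter_ext_in. intros i Hi. destruct (Har i Hi) as [j Cj].
    destruct (arc_orient c f i j Hs Of Cj) as [[A _]|[A _]]; rewrite A; auto. }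
  rewrite E.
  enough (length (filter (fun i => isDown (f i)) LA) = length (filter (fun i => isUp (f i)) LA)) by lia.
  apply Nat.le_antisymm; apply (pair_le LA _ _ (partner (cup_arcs c)) Hnd);
  intros i Hi HP; destruct (Har i Hi) as [j Cj]; destruct (Hs _ _ Cj) as [_ Dj];
  unfold partner; rewrite Cj, Dj;
  (split; [apply (Hcl i j); auto|]); (split; [|reflexivity]);
  destruct (arc_orient c f i j Hs Of Cj) as [[A B]|[A B]]; rewrite A in HP; rewrite B; simpl in *; auto; discriminate.
Qed.

Lemma cup_exist lam a : is_weight lam -> cup_wf a -> oriented_cup a lam ->
  is_weight (mkalpha (cup_arcs a) lam) /\ is_underline (mkalpha (cup_arcs a) lam) a /\
  wsubset (mkalpha (cup_arcs a) lam) lam.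
Proof.
  intros [F HF] Hwf Ol. assert (Hwf' := Hwf). destruct Hwf' as [Hs [[L0 HL0] _]].
  set (al := mkalpha (cup_arcs a) lam).
  assert (Aoff : forall i, (forall j, cup_arcs a i <> VArc j) -> al i = lam i).
  { intros i H. unfold al, mkalpha. destruct (cup_arcs a i) eqn:E; auto. exfalso; apply (H j); auto. }
  assert (Aarc : forall i j, cup_arcs a i = VArc j -> i < j -> al i = Down /\ al j = Up).
  { intros i j Cij Hlt. destruct (Hs _ _ Cij) as [_ Cji]. unfold al, mkalpha. rewrite Cij, Cji.
    assert (E1 : (i <? j) = true) by (apply Z.ltb_lt; auto).
    assert (E2 : (j <? i) = false) by (apply Z.ltb_ge; lia). rewrite E1, E2; auto. }
  assert (Aor : oriented_cup a al).
  { destruct Ol as [O1 [O2 [O3 O4]]]. split; [|split; [|split]].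
    - intros i. destruct (cup_arcs a i) eqn:E.
      + rewrite Aoff by congruence. specialize (O1 i). rewrite E in O1. exact O1.
      + rewrite Aoff by congruence. split; [discriminate|]. intros H.
        destruct (O3 i E) as [A|A]; destruct H; congruence.
      + split; [discriminate|]. intros H. unfold al, mkalpha in H. rewrite E in H.
        destruct (i <? j); destruct H; discriminate.
    - intros i j Cij Hlt. left. apply Aarc; auto.
    - intros i Ci. rewrite Aoff by congruence. auto.
    - intros i j Hlt Ci Cj. rewrite !Aoff by congruence. auto. }
  assert (Aund : is_underline al a).
  { split; auto. split; auto. exists []. split; [constructor|]. split; auto.
    intros i; split; [intros []|]. intros [j [Cij [Hlt Hu]]].
    destruct (Aarc i j Cij Hlt) as [A _]; congruence. }
  split; [|split; auto].
  - exists (F ++ L0). intros i j Hlt Hi Hj.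
    assert (Ni : forall k, cup_arcs a i <> VArc k) by (intros k E; apply Hi, in_or_app; right; eapply HL0; eauto).
    assert (Nj : forall k, cup_arcs a j <> VArc k) by (intros k E; apply Hj, in_or_app; right; eapply HL0; eauto).
    rewrite (Aoff i Ni), (Aoff j Nj). apply HF; auto; intros h; [apply Hi|apply Hj]; apply in_or_app; auto.
  - split; [|exists a; split; auto].
    split.
    + intros i. destruct (cup_arcs a i) eqn:E.
      * rewrite Aoff by congruence. tauto.
      * rewrite Aoff by congruence. tauto.
      * assert (H1 : ~ (lam i = Circ \/ lam i = Cross)) by (intro H; apply (proj1 Ol i) in H; congruence).
        assert (H2 : ~ (al i = Circ \/ al i = Cross)) by (intro H; apply (proj1 Aor i) in H; congruence).
        split; split; intro; exfalso; tauto.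
    + set (LA := filter (fun i => isArcb (cup_arcs a i)) (nodup Z.eq_dec L0)).
      assert (Har : forall i, In i LA -> exists j, cup_arcs a i = VArc j).
      { intros i Hi. apply filter_In in Hi as [_ Hi]. destruct (cup_arcs a i); try discriminate. eauto. }
      assert (Hin : forall i j, cup_arcs a i = VArc j -> In i LA).
      { intros i j Cij. apply filter_In. split; [apply nodup_In; eapply HL0; eauto|]. rewrite Cij; auto. }
      assert (Hcl : forall i j, In i LA -> cup_arcs a i = VArc j -> In j LA).
      { intros i j _ Cij. destruct (Hs _ _ Cij) as [_ Cji]. eapply Hin; eauto. }
      assert (Hnd : NoDup LA) by (apply NoDup_filter, NoDup_nodup).
      exists LA. split; auto. split.
      * intros i Hi. apply Aoff. intros j Cij. apply Hi. eapply Hin; eauto.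
      * assert (X1 := arc_count a al LA Hs Aor Hnd Har Hcl).
        assert (X2 := arc_count a lam LA Hs Ol Hnd Har Hcl). lia.
Qed.

Lemma cup_uniq lam a beta : cup_wf a -> oriented_cup a lam ->
  is_underline beta a -> wsubset beta lam -> beta = mkalpha (cup_arcs a) lam.
Proof.
  intros [Hs _] Ol Hu [Hsim _]. assert (Hu' := Hu). destruct Hu' as [_ [Ob _]].
  apply functional_extensionality; intros i. unfold mkalpha.
  destruct (cup_arcs a i) as [| |j] eqn:E.
  - apply free_eq; auto. apply (proj1 Ob i); auto. apply (proj1 Ol i); auto.
  - apply (ray_eq a); auto.
  - destruct (i <? j) eqn:L.
    + apply Z.ltb_lt in L. apply (underline_facts beta a i j); auto.
    + apply Z.ltb_ge in L. destruct (Hs _ _ E) as [Hne Ej].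
      apply (underline_facts beta a j i); auto. lia.
Qed.

Lemma over_under beta b : is_overline beta b <-> is_underline beta (cap_star b).
Proof.
  split.
  - intros [c [Hu ->]]. destruct c; exact Hu.
  - intros H. exists (cap_star b). split; auto. destruct b; reflexivity.
Qed.

Theorem lemma2p3 :
  (forall lam mu : labelling, is_weight lam -> is_weight mu ->
     wsubset mu lam -> bruhat_le mu lam) /\
  (forall (lam : labelling) (a : cupdiag), is_weight lam -> cup_wf a ->
     oriented_cup a lam ->
     exists! alpha, is_weight alpha /\ is_underline alpha a /\ wsubset alpha lam) /\
  (forall (lam : labelling) (b : capdiag), is_weight lam -> cap_wf b ->
     oriented_cap lam b ->
     exists! beta, is_weight beta /\ is_overline beta b /\ wsubset beta lam) /\
  (forall (lam : labelling) (a : cupdiag) (b : capdiag), is_weight lam ->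
     cup_wf a -> cap_wf b -> oriented_circle a lam b ->
     exists! ab : labelling * labelling,
       is_weight (fst ab) /\ is_weight (snd ab) /\
       is_underline (fst ab) a /\ is_overline (snd ab) b /\
       wsubset (fst ab) lam /\ wsubset (snd ab) lam).
Proof.
  split; [intros lam mu _ _; apply part1|].
  split; [|split].
  - intros lam a Hw Hwf Ol. exists (mkalpha (cup_arcs a) lam). split.
    + apply cup_exist; auto.
    + intros beta [_ [Hu Hs]]. symmetry. apply (cup_uniq lam a); auto.
  - intros lam b Hw Hwf Ol. exists (mkalpha (cup_arcs (cap_star b)) lam). split.
    + destruct (cup_exist lam (cap_star b) Hw Hwf Ol) as [A [B C]].
      split; auto. split; auto. apply over_under; auto.
    + intros beta [_ [Hu Hs]]. symmetry. apply (cup_uniq lam (cap_star b)); auto.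
      apply over_under; auto.
  - intros lam a b Hw Hwa Hwb [Oa Ob].
    exists (mkalpha (cup_arcs a) lam, mkalpha (cup_arcs (cap_star b)) lam). split.
    + destruct (cup_exist lam a Hw Hwa Oa) as [A [B C]].
      destruct (cup_exist lam (cap_star b) Hw Hwb Ob) as [A' [B' C']].
      simpl. split; [auto|split; [auto|split; [auto|split; [apply over_under; auto|split; auto]]]].
    + intros [x y] [_ [_ [Hx [Hy [Sx Sy]]]]]. simpl in *.
      rewrite (cup_uniq lam a x); auto. rewrite (cup_uniq lam (cap_star b) y); auto.
      apply over_under; auto.
Qed.
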